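(* Let $G=(V,E)$ be a circular arc graph which is not an interval graph, let $M=(C,\mathcal A)$ be a circular arc model of $G$, let $p$ be any point of $C$, let $A$ be the set of vertices whose arcs contain $p$, and let $B=V\setminus A$. Let $G'=(V,E')$ with $E'=E\cup\{\{u',v'\}: u',v'\in B,\ u'\neq v'\}$. Then $G'$ is a co-bipartite circular arc graph.
   Context: A circular arc model $M=(C,\mathcal A)$ of $G$ consists of a circle $C$ and arcs of $C$, one per vertex, such that two vertices are adjacent iff their arcs intersect; a circular arc graph is a graph having such a model. An interval graph is the intersection graph of a finite family of intervals of the real line. A graph is co-bipartite if its vertex set can be partitioned into two cliques. *)

(* Defs.v *)
From mathcomp Require Import all_boot all_order all_algebra.
From mathcomp Require Import boolp reals.
Set Implicit Arguments. Unset Strict Implicit. Unset Printing Implicit Defensive.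
Import Order.TTheory GRing.Theory Num.Theory.
Local Open Scope ring_scope.

Definition simple_graph (T : finType) (e : rel T) : Prop :=
  irreflexive e /\ symmetric e.

(* The circle C is R/Z; a point of C is represented by any real (mod 1).
   A (closed) arc is a pair (s, l) with 0 <= l <= 1: the set of points
   x such that x + k lies in [s, s + l] for some integer k
   (counterclockwise from s, length l; l = 1 is the whole circle). *)
Definition carc (R : realType) := (R * R)%type.

Definition valid_arc (R : realType) (a : carc R) : Prop :=
  0 <= a.2 <= 1.

Definition on_arc (R : realType) (x : R) (a : carc R) : Prop :=
  exists k : int, a.1 <= x + k%:~R <= a.1 + a.2.

Definition arcs_meet (R : realType) (a b : carc R) : Prop :=
  exists x : R, on_arc x a /\ on_arc x b.

Definition ca_model (R : realType) (T : finType) (e : rel T)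
    (M : T -> carc R) : Prop :=
  (forall v, valid_arc (M v)) /\
  (forall u v, u != v -> (e u v <-> arcs_meet (M u) (M v))).

Definition circular_arc_graph (T : finType) (e : rel T) : Prop :=
  exists (R : realType) (M : T -> carc R), ca_model e M.

Definition interval_graph (T : finType) (e : rel T) : Prop :=
  exists (R : realType) (I : T -> R * R),
    (forall v, (I v).1 <= (I v).2) /\
    (forall u v, u != v ->
       (e u v <-> exists x : R, (I u).1 <= x <= (I u).2 /\ (I v).1 <= x <= (I v).2)).

Definition is_clique (T : finType) (e : rel T) (S : {set T}) : Prop :=
  forall u v, u \in S -> v \in S -> u != v -> e u v.

Definition cobipartite (T : finType) (e : rel T) : Prop :=
  exists S : {set T}, is_clique e S /\ is_clique e (~: S).

Definition add_clique (T : finType) (e : rel T) (B : {set T}) : rel T :=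
  fun u v => e u v || [&& u != v, u \in B & v \in B].

(* Main.v *)
Require Import Defs.
From mathcomp Require Import all_boot all_order all_algebra.
From mathcomp Require Import boolp reals.
From mathcomp Require Import lra zify.
Set Implicit Arguments. Unset Strict Implicit. Unset Printing Implicit Defensive.
Import Order.TTheory GRing.Theory Num.Theory.
Local Open Scope ring_scope.

Section S.
Variable R : realType.

Definition meetc (a1 a2 b1 b2 : R) : Prop :=
  exists m : int, b1 + m%:~R <= a1 + a2 /\ a1 <= b1 + b2 + m%:~R.

Lemma meetE (a b : carc R) : valid_arc a -> valid_arc b ->
  arcs_meet a b <-> meetc a.1 a.2 b.1 b.2.
Proof.
case: a => a1 a2; case: b => b1 b2; rewrite /valid_arc /= => /andP[ha _] /andP[hb _].
split.
- move=> [x [[k1 /andP[h1 h2]] [k2 /andP[h3 h4]]]].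
  exists (k1 - k2); rewrite intrB /=; move: h1 h2 h3 h4 => /= h1 h2 h3 h4; split; lra.
- move=> [m [h1 h2]].
  have [hl|hl] := lerP a1 (b1 + m%:~R).
  + exists (b1 + m%:~R); split.
      by exists 0; rewrite mulr0z addr0; rewrite /=; apply/andP; split; lra.
    by exists (-m); rewrite intrN; rewrite /=; apply/andP; split; lra.
  + exists a1; split.
      by exists 0; rewrite mulr0z addr0; rewrite /=; apply/andP; split; lra.
    by exists (-m); rewrite intrN; rewrite /=; apply/andP; split; lra.
Qed.

Lemma meet_shift (a1 a2 b1 b2 p : R) (ka kb : int) :
  meetc a1 a2 b1 b2 <->
  meetc (a1 - p - ka%:~R) a2 (b1 - p - kb%:~R) b2.
Proof.
split.
- move=> [m [h1 h2]]; exists (m + kb - ka); rewrite !intrD intrN; split; lra.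
- move=> [m [h1 h2]]; exists (m - kb + ka); rewrite !intrD intrN; split; lra.
Qed.

Lemma meetc_sym a1 a2 b1 b2 : meetc a1 a2 b1 b2 -> meetc b1 b2 a1 a2.
Proof. by move=> [m [h1 h2]]; exists (-m); rewrite intrN; split; lra. Qed.

Lemma arcs_meet_sym (a b : carc R) : arcs_meet a b -> arcs_meet b a.
Proof. by move=> [x [h1 h2]]; exists x. Qed.

Lemma intr_ge1 (m:int) : (1 <= m)%R -> 1 <= m%:~R :> R.
Proof. by move=> h; rewrite -(ler_int R) in h. Qed.
Lemma intr_lem2 (m:int) : (m <= -2)%R -> m%:~R <= -2 :> R.
Proof. by move=> h; rewrite -(ler_int R) in h. Qed.

Lemma int_cases (m : int) : (1 <= m) \/ m = 0 \/ m = -1 \/ m <= -2.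
Proof. lia. Qed.

Lemma key (c a2 x b2 : R) : -a2 <= c -> c <= 0 -> a2 <= 1 ->
  0 < x -> 0 <= b2 -> x + b2 < 1 ->
  meetc c a2 x b2 <-> meetc (c/3) (a2/3) (x/3) ((2 + b2)/3).
Proof.
move=> h1 h2 h3 h4 h5 h6.
split => -[m [k1 k2]].
-
  case: (int_cases m) => [hm|[hm|[hm|hm]]].
  + have hm' := intr_ge1 hm; lra.
  + subst m; exists 0; rewrite mulr0z in k1 k2 *; split; lra.
  + subst m; exists (-1); rewrite intrN mulr1z in k1 k2 *; split; lra.
  + have hm' := intr_lem2 hm; lra.
-
  case: (int_cases m) => [hm|[hm|[hm|hm]]].
  + have hm' := intr_ge1 hm; lra.
  + subst m; exists 0; rewrite mulr0z in k1 k2 *; split; lra.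
  + subst m; exists (-1); rewrite intrN mulr1z in k1 k2 *; split; lra.
  + have hm' := intr_lem2 hm; lra.
Qed.

End S.

Theorem lemma6 (T : finType) (e : rel T) (R : realType) (M : T -> carc R)
    (p : R) :
  simple_graph e ->
  circular_arc_graph e ->
  ~ interval_graph e ->
  ca_model e M ->
  let A := [set v | `[< on_arc p (M v) >]] in
  let B := ~: A in
  cobipartite (add_clique e B) /\ circular_arc_graph (add_clique e B).
Proof.
move=> [irr sym] _ _ [valid hM] A B.
have meetA : forall u v, u \in A -> v \in A -> arcs_meet (M u) (M v).
  move=> u v; rewrite !inE => /asboolP hu /asboolP hv; exists p; split => //.
split.
  exists A; split.
  - move=> u v hu hv huv; apply/orP; left; apply/(hM _ _ huv); exact: meetA.
  - move=> u v hu hv huv; apply/orP; right; by rewrite huv hu hv.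
pose K v := Num.ceil ((M v).1 - p).
pose c v := (M v).1 - p - (K v)%:~R.
have cbnd : forall v, -1 < c v <= 0.
  move=> v; have := ceil_itv ((M v).1 - p); rewrite /c /K intrB => /andP[h1 h2].
  apply/andP; split; lra.
have cA : forall v, (v \in A) = (- (M v).2 <= c v).
  move=> v; rewrite inE; apply/asboolP/idP.
  - move=> [k /andP[h1 h2]].
    have : K v <= k by rewrite /K ceil_le_int; lra.
    rewrite -(ler_int R) /c => hk; lra.
  - move=> h; exists (K v); apply/andP; split.
      by have := ceil_ge ((M v).1 - p); rewrite -/(K v); lra.
    by move: h; rewrite /c; lra.
pose N v : carc R := if v \in A then (c v / 3, (M v).2 / 3)
                      else ((c v + 1) / 3, (2 + (M v).2) / 3).
have vN : forall v, valid_arc (M v) by [].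
have keyAB : forall u v, u \in A -> v \notin A ->
   (arcs_meet (M u) (M v) <-> arcs_meet (N u) (N v)).
  move=> u v hu hv; rewrite /N hu (negbTE hv).
  have [hu1 hu2] := andP (valid u); have [hv1 hv2] := andP (valid v).
  have [c1 c2] := andP (cbnd u); have [d1 d2] := andP (cbnd v).
  move: hu hv; rewrite !cA -ltNge => hu hv.
  rewrite meetE // meetE /valid_arc /=; last 2 first.
    by apply/andP; split; lra.
    by apply/andP; split; lra.
  rewrite (meet_shift _ _ _ _ p (K u) (K v) ) -/(c u) -/(c v).
  have kk := @key R (c u) (M u).2 (c v + 1) (M v).2.
  have e1 : meetc (c u) (M u).2 (c v) (M v).2 <-> meetc (c u) (M u).2 (c v + 1) (M v).2.
    split => -[m [h1 h2]].
    - by exists (m - 1); rewrite intrB; split; lra.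
    - by exists (m + 1); rewrite intrD; split; lra.
  rewrite e1; apply: kk; lra.
exists R, N; split.
  move=> v; rewrite /N /valid_arc; have [h1 h2] := andP (valid v).
  by case: ifP => _ /=; apply/andP; split; lra.
move=> u v huv; rewrite /add_clique huv /B !in_setC /=.
case hu: (u \in A); case hv: (v \in A) => /=; rewrite ?orbF ?orbT.
- split => _; last by by apply/(hM _ _ huv); exact: meetA.
  rewrite /N hu hv; exists 0.
  have := cbnd u; have := cbnd v; have := valid u; have := valid v.
  move: (hu) (hv); rewrite !cA /valid_arc => ? ? /andP[? ?] /andP[? ?] /andP[? ?] /andP[? ?].
  by split; exists 0; rewrite mulr0z addr0 /=; apply/andP; split; lra.
- rewrite (hM _ _ huv); apply: keyAB => //; by rewrite hv.
- rewrite (hM _ _ huv); split => h; apply: arcs_meet_sym; apply/(keyAB v u) => //;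
    [by rewrite hu | exact: arcs_meet_sym | by rewrite hu | exact: arcs_meet_sym].
- split => _ //.
  rewrite /N hu hv; exists (1/2).
  have := cbnd u; have := cbnd v; have := valid u; have := valid v.
  rewrite /valid_arc => /andP[? ?] /andP[? ?] /andP[? ?] /andP[? ?].
  by split; exists 0; rewrite mulr0z addr0 /=; apply/andP; split; lra.
Qed.
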